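(* Let $T$ be a tree on $n$ vertices. Then $k(T)\ge \left\lceil \frac{\mathrm{diam}(T)+1}{2}\right\rceil$, and this bound is tight (equality holds, for example, for stars and for paths).
   Context: For a connected graph $G=(V,E)$ and $v\in V$, the status of $v$ is $s(v)=\sum_{u\in V} d(v,u)$, where $d$ is the shortest-path distance. $k(G)$ denotes the number of distinct values among the statuses of the vertices of $G$. $\mathrm{diam}(T)$ is the diameter of $T$. *)

(* Defs.v *)
From mathcomp Require Import all_boot.
Set Implicit Arguments. Unset Strict Implicit. Unset Printing Implicit Defensive.

Section Graphs.
Variables (T : finType) (e : rel T).

Definition simple_graph : Prop := symmetric e /\ irreflexive e.

Definition connected_graph : Prop := forall x y : T, connect e x y.

Definition acyclic_graph : Prop :=
  forall c : seq T, uniq c -> 3 <= size c -> ~~ cycle e c.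

Definition is_tree : Prop :=
  [/\ simple_graph, 0 < #|T|, connected_graph & acyclic_graph].

Definition walk_len (x y : T) (n : nat) : bool :=
  [exists p : n.-tuple T, path e x p && (last x p == y)].

(* shortest-path distance: least n with a walk of length n from x to y
   (in a connected graph such n exists and is < #|T|). *)
Definition dist (x y : T) : nat := find (walk_len x y) (iota 0 #|T|).

Definition status (v : T) : nat := \sum_(u : T) dist v u.

(* k(G): number of distinct status values *)
Definition num_status : nat := size (undup [seq status v | v <- enum T]).

Definition diam : nat := \max_(u : T) \max_(v : T) dist u v.

End Graphs.

Definition path_graph (n : nat) : rel 'I_n :=
  fun i j => (i.+1 == j :> nat) || (j.+1 == i :> nat).

Definition star_graph (n : nat) : rel 'I_n :=
  fun i j => (i != j) && ((i == 0 :> nat) || (j == 0 :> nat)).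
Arguments path_graph n : clear implicits.
Arguments star_graph n : clear implicits.

(* Main.v *)
Require Import Defs.
From mathcomp Require Import all_boot zify.
Set Implicit Arguments. Unset Strict Implicit. Unset Printing Implicit Defensive.

Lemma walk_lenP (T : finType) (e : rel T) x y n :
  reflect (exists p : seq T, [/\ size p = n, path e x p & last x p = y])
          (walk_len e x y n).
Proof.
apply: (iffP existsP).
  by move=> [p /andP[H1 /eqP H2]]; exists (val p); rewrite size_tuple.
move=> [p [Hs H1 H2]].
have Hs' : size p == n by apply/eqP.
by exists (Tuple Hs'); rewrite /= H1 H2 eqxx.
Qed.

Lemma dist_le (T : finType) (e : rel T) x y p :
  path e x p -> last x p = y -> dist e x y <= size p.
Proof.
move=> Hp Hl; rewrite /dist.
case: (ltnP (size p) #|T|) => h; last first.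
  by apply: leq_trans (find_size _ _) _; rewrite size_iota.
rewrite leqNgt; apply/negP => /(before_find 0).
rewrite nth_iota // add0n => /walk_lenP; apply.
by exists p.
Qed.

Lemma dist_walk (T : finType) (e : rel T) x y :
  connected_graph e ->
  exists p, [/\ size p = dist e x y, path e x p & last x p = y].
Proof.
move=> Hc; have := Hc x y => /connectP [p0 Hp0 ->].
case: (shortenP Hp0) => p Hp Hu _.
have Hsz : size p < #|T|.
  by move/card_uniqP: Hu => /= <-; apply: max_card.
have Hhas : has (walk_len e x (last x p)) (iota 0 #|T|).
  apply/hasP; exists (size p); first by rewrite mem_iota.
  by apply/walk_lenP; exists p.
have := nth_find 0 Hhas; rewrite has_find size_iota in Hhas.
by rewrite nth_iota // add0n => /walk_lenP.
Qed.

Lemma dist0 (T : finType) (e : rel T) x y :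
  connected_graph e -> dist e x y = 0 -> x = y.
Proof.
move=> Hc H0; have [p [Hs _ Hl]] := dist_walk x y Hc.
by move: Hs; rewrite H0 => /size0nil Hp; move: Hl; rewrite Hp.
Qed.

Lemma dist_nb (T : finType) (e : rel T) a x u :
  connected_graph e -> e a x -> dist e a u <= (dist e x u).+1.
Proof.
move=> Hc Hax; have [p [Hs Hp Hl]] := dist_walk x u Hc.
rewrite -Hs; apply: (@dist_le _ _ _ _ (x :: p)) => //=.
by rewrite Hax.
Qed.

Lemma dist_visit (T : finType) (e : rel T) a x u p :
  path e a p -> last a p = u -> x \in p -> dist e x u < size p.
Proof.
move=> Hp Hl Hx; case/splitPr: Hx Hp Hl => p1 p2.
rewrite cat_path last_cat /= => /andP[_ /andP[_ H2]] Hl.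
have := dist_le H2 Hl; rewrite size_cat /=; lia.
Qed.


Lemma rev_walk (T : eqType) (e : rel T) x p :
  symmetric e -> path e x p ->
  exists q, [/\ path e (last x p) q, last (last x p) q = x & {subset q <= x :: p}].
Proof.
move=> Hs Hp; exists (rev (belast x p)); split.
- by rewrite rev_path (@eq_path _ _ e) // => a b /=; exact: Hs.
- case: p {Hp} => [|y p] //=; by rewrite rev_cons last_rcons.
- by move=> z; rewrite mem_rev => /mem_belast.
Qed.

Lemma no_two_closer (T : finType) (e : rel T) x a b u :
  is_tree e -> e x a -> e x b -> a != b ->
  dist e a u <= dist e x u -> dist e b u <= dist e x u -> False.
Proof.
move=> [[Hsym Hirr] _ Hc Hac] Hxa Hxb Hab HA HB.
have [pa [Hsa Hpa Hla]] := dist_walk a u Hc.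
have [pb [Hsb Hpb Hlb]] := dist_walk b u Hc.
have Hxpa : x \notin pa.
  apply/negP => Hx; have := dist_visit Hpa Hla Hx; lia.
have Hxpb : x \notin pb.
  apply/negP => Hx; have := dist_visit Hpb Hlb Hx; lia.
have [q [Hq Hlq Hsq]] := rev_walk Hsym Hpb.
rewrite Hlb in Hq Hlq.
have HW : path e a (pa ++ q) by rewrite cat_path Hpa Hla Hq.
have HlW : last a (pa ++ q) = b by rewrite last_cat Hla.
have HxW : x \notin pa ++ q.
  rewrite mem_cat negb_or Hxpa /=; apply/negP => /Hsq.
  rewrite inE (negbTE Hxpb) orbF => /eqP Hxb'.
  by move: Hxb; rewrite Hxb' Hirr.
case: (shortenP HW) HlW => p' Hp' Hu Hsub Hl'.
apply: (negP (Hac (x :: a :: p') _ _)).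
- rewrite /= andbC; move: Hu => /= -> /=; rewrite inE negb_or.
  apply/andP; split; last by apply/negP => /Hsub; apply/negP.
  by apply/negP => /eqP Hxa'; move: Hxa; rewrite Hxa' Hirr.
- case: p' Hl' {Hp' Hu Hsub} => [/= Hab'|y p'' _] //.
  by move: Hab; rewrite Hab' eqxx.
- rewrite /= Hxa /= rcons_path Hp' Hl' /= Hsym //.
Qed.

Lemma convex_pt (T : finType) (e : rel T) x a b u :
  is_tree e -> e x a -> e x b -> a != b ->
  2 * dist e x u <= dist e a u + dist e b u.
Proof.
move=> Ht Hxa Hxb Hab.
have [[Hsym _] _ Hc _] := Ht.
have H1 := dist_nb u Hc Hxa. have H2 := dist_nb u Hc Hxb.
rewrite Hsym in Hxa; rewrite Hsym in Hxb.
have H3 := dist_nb u Hc Hxa. have H4 := dist_nb u Hc Hxb.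
case: (leqP (dist e a u) (dist e x u)) => HA;
case: (leqP (dist e b u) (dist e x u)) => HB; try lia.
rewrite Hsym in Hxa; rewrite Hsym in Hxb.
by case: (no_two_closer Ht Hxa Hxb Hab HA HB).
Qed.


Lemma convex_count (f : nat -> nat) L (s : seq nat) :
  (forall i, i.+2 <= L -> 2 * f i.+1 < f i + f i.+2) ->
  (forall i, i <= L -> f i \in s) -> uphalf L.+1 <= size (undup s).
Proof.
move=> Hcv Hs.
set a := fun i => f i <= f i.+1.
set m := find a (iota 0 L).
have HmL : m <= L by have := find_size a (iota 0 L); rewrite size_iota.
have Hdec1 : forall j, j < m -> f j.+1 < f j.
  move=> j Hj; have := before_find 0 Hj; rewrite nth_iota; last by lia.
  by rewrite /a add0n => /negbT; rewrite -ltnNge.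
have Hdec : forall j, j <= m -> forall i, i < j -> f j < f i.
  elim=> [//|j IH] Hj i Hi.
  have H1 := Hdec1 j Hj; rewrite ltnS leq_eqVlt in Hi.
  case/orP: Hi => [/eqP->//|Hij].
  have := IH (ltnW Hj) i Hij; lia.
have Hinc0 : forall k, m + k < L -> f (m + k) <= f (m + k).+1.
  elim=> [|k IH] Hk.
    rewrite addn0 in Hk *.
    have Hh : has a (iota 0 L) by rewrite has_find size_iota.
    by have := nth_find 0 Hh; rewrite nth_iota // add0n.
  have := IH ltac:(lia).
  have := Hcv (m + k); rewrite !addnS in Hk * => H; have := H Hk; lia.
have Hinc1 : forall i, m < i -> i < L -> f i < f i.+1.
  move=> i H1 H2; have := Hinc0 (i.-1 - m); have := Hcv i.-1.
  have -> : m + (i.-1 - m) = i.-1 by lia.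
  have -> : i.-1.+1 = i by lia.
  move=> H3 H4; have := H3 ltac:(lia); have := H4 ltac:(lia); lia.
have Hinc : forall j, j <= L -> forall i, m < i < j -> f i < f j.
  elim=> [|j IH] Hj i; first by lia. move=> /andP[Hi1 Hi2].
  have H := Hinc1 j; rewrite ltnS leq_eqVlt in Hi2.
  case/orP: Hi2 => [/eqP Eij|Hij]. rewrite Eij; apply: H; lia.
  have := H ltac:(lia) Hj; have := IH (ltnW Hj) i ltac:(lia); lia.
have U1 : uniq (map f (iota 0 m.+1)).
  rewrite map_inj_in_uniq ?iota_uniq // => i j; rewrite !mem_iota !add0n.
  move=> Hi Hj Hf; case: (ltngtP i j) => // H.
    by have := Hdec j ltac:(lia) i H; rewrite Hf ltnn.
  by have := Hdec i ltac:(lia) j H; rewrite Hf ltnn.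
have U2 : uniq (map f (iota m.+1 (L - m))).
  rewrite map_inj_in_uniq ?iota_uniq // => i j; rewrite !mem_iota.
  move=> Hi Hj Hf; case: (ltngtP i j) => // H.
    by have := Hinc j ltac:(lia) i ltac:(lia); rewrite Hf ltnn.
  by have := Hinc i ltac:(lia) j ltac:(lia); rewrite Hf ltnn.
have S1 := uniq_leq_size U1 (_ : {subset _ <= undup s}).
have S2 := uniq_leq_size U2 (_ : {subset _ <= undup s}).
have T1 : size (map f (iota 0 m.+1)) <= size (undup s).
  apply: S1 => y /mapP [i]; rewrite mem_iota => Hi ->; rewrite mem_undup.
  apply: Hs; lia.
have T2 : size (map f (iota m.+1 (L - m))) <= size (undup s).
  apply: S2 => y /mapP [i]; rewrite mem_iota => Hi ->; rewrite mem_undup.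
  apply: Hs; lia.
rewrite !size_map !size_iota in T1 T2.
rewrite uphalfE; lia.
Qed.


Lemma dist_self (T : finType) (e : rel T) x : dist e x x = 0.
Proof. by apply/eqP; rewrite -leqn0 (@dist_le _ _ _ _ [::]). Qed.

Lemma status_convex (T : finType) (e : rel T) x a b :
  is_tree e -> e x a -> e x b -> a != b ->
  2 * status e x < status e a + status e b.
Proof.
move=> Ht Hxa Hxb Hab; have [[Hsym Hirr] _ Hc _] := Ht.
rewrite /status -big_split big_distrr /= (bigD1 x) //= [X in _ < X](bigD1 x) //=.
rewrite dist_self muln0 add0n.
have Ha : 0 < dist e a x.
  rewrite lt0n; apply/negP => /eqP /(dist0 Hc) Hax.
  by move: Hxa; rewrite Hax Hirr.
have Hs : \sum_(i | i != x) 2 * dist e x i <= \sum_(i | i != x) (dist e a i + dist e b i).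
  by apply: leq_sum => u _; apply: convex_pt.
lia.
Qed.

Lemma part1 (T : finType) (e : rel T) : is_tree e -> uphalf (diam e).+1 <= num_status e.
Proof.
move=> Ht; have [[Hsym Hirr] Hn Hc Hac] := Ht.
case/card_gt0P: Hn => x0 _.
have [x [y Hd]] : exists x y, diam e = dist e x y.
  rewrite /diam (bigmax_eq_arg x0) //; set x := [arg max_(_ > x0 | _) _].
  by rewrite (bigmax_eq_arg x0) //; eexists; eexists.
have [p [Hs Hp Hl]] := dist_walk x y Hc.
case: (shortenP Hp) Hl => p' Hp' Hu _ Hl.
have HL := dist_le Hp' Hl.
have := @convex_count (fun i => status e (nth x (x :: p') i)) (size p') (map (status e) (enum T)).
rewrite /num_status; move=> H; apply: leq_trans (H _ _); first by rewrite !uphalfE; apply: half_leq; rewrite Hd; by rewrite ltnS ltnS.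
- move=> i Hi; apply: status_convex => //.
  + move/pathP: Hp' => /(_ x i) H1; rewrite Hsym; apply: H1; lia.
  + move/pathP: Hp' => /(_ x i.+1) H1; apply: H1; lia.
  + rewrite nth_uniq //=; try lia; first by rewrite ltnS; apply: leq_trans (leqnSn _) (ltnW Hi).
- by move=> i _; rewrite map_f // mem_enum.
Qed.


Lemma walk_autom (T : finType) (e : rel T) (s : T -> T) :
  (forall x y, e (s x) (s y) = e x y) -> injective s ->
  forall x y n, walk_len e x y n -> walk_len e (s x) (s y) n.
Proof.
move=> He Hi x y n /walk_lenP [p [Hs Hp Hl]]; apply/walk_lenP.
exists (map s p); rewrite size_map last_map Hl; split => //.
by rewrite path_map (@eq_path _ _ e) // => a b /=; rewrite He.
Qed.

Lemma dist_autom (T : finType) (e : rel T) (s : T -> T) :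
  (forall x, s (s x) = x) -> (forall x y, e (s x) (s y) = e x y) ->
  forall x y, dist e (s x) (s y) = dist e x y.
Proof.
move=> Hk He x y; rewrite /dist; apply: eq_find => n.
have Hi : injective s by apply: (can_inj Hk).
apply/idP/idP; last exact: walk_autom.
by move/(walk_autom He Hi); rewrite !Hk.
Qed.

Lemma status_autom (T : finType) (e : rel T) (s : T -> T) :
  (forall x, s (s x) = x) -> (forall x y, e (s x) (s y) = e x y) ->
  forall x, status e (s x) = status e x.
Proof.
move=> Hk He x; rewrite /status (reindex_inj (can_inj Hk)) /=.
by apply: eq_bigr => u _; rewrite dist_autom.
Qed.

Lemma num_status_le (T : finType) (e : rel T) (s : seq nat) :
  (forall v, status e v \in s) -> num_status e <= size s.
Proof.
move=> H; rewrite /num_status; apply: uniq_leq_size; first exact: undup_uniq.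
by move=> z; rewrite mem_undup => /mapP [v _ ->].
Qed.

Lemma diam_ge (T : finType) (e : rel T) x y : dist e x y <= diam e.
Proof.
rewrite /diam; apply: leq_trans (leq_bigmax x); exact: (leq_bigmax y).
Qed.

Lemma acyclic_ord n (e : rel 'I_n) :
  (forall m a b : 'I_n, a != b -> e m a -> e b m -> a <= m -> b <= m -> False) ->
  acyclic_graph e.
Proof.
move=> H c Hu Hs; apply/negP => Hcy.
case: c Hu Hs Hcy => [//|c0 c1] Hu Hs Hcy.
have Hc0 : c0 \in c0 :: c1 by rewrite inE eqxx.
case: (arg_maxnP (fun i : 'I_n => nat_of_ord i) Hc0) => m Hm Hmax.
have := rot_index Hm; set c' := (drop _ _ ++ take _ _) => Hrot; clearbody c'.
have Hu' : uniq (m :: c') by rewrite -Hrot rot_uniq.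
have Hcy' : cycle e (m :: c') by rewrite -Hrot rot_cycle.
have Hsz : 2 <= size c'.
  have := size_rot (index m (c0 :: c1)) (c0 :: c1); rewrite Hrot /= => E; move: Hs => /= Hs; lia.
have Hin : forall z, z \in c' -> z <= m.
  move=> z Hz; apply: Hmax.
  have : z \in rot (index m (c0 :: c1)) (c0 :: c1) by rewrite Hrot inE Hz orbT.
  by rewrite mem_rot.
move: Hu' Hcy' Hin Hsz; clear Hrot; case: c' => [|a [|b0 s2]] //= Hu' Hcy' Hin _.
move: Hcy' => /and3P[Hma Hab0 Hp].
have Hbm : e (last b0 s2) m by move: Hp; rewrite rcons_path => /andP[].
apply: (H m a (last b0 s2)) => //.
- move: Hu' => /and4P[_ Ha _ _]; apply/negP => /eqP Hab.
  by move: Ha; rewrite Hab mem_last.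
- by apply: Hin; rewrite inE eqxx.
- by apply: Hin; rewrite inE mem_last orbT.
Qed.


Lemma path_walk n (i : 'I_n) p : path (path_graph n) i p ->
  (last i p <= i + size p) /\ (i <= last i p + size p).
Proof.
elim: p i => [|j p IH] i /=; first by rewrite !addn0.
move=> /andP[Hij /IH [H1 H2]]; move: Hij; rewrite /path_graph.
case/orP => /eqP Hij; lia.
Qed.

Lemma path_tree n : 0 < n -> is_tree (path_graph n).
Proof.
case: n => [//|n] _; split.
- split.
  + by move=> x y; rewrite /path_graph orbC.
  + by move=> x; rewrite /path_graph; apply/negP => /orP[] /eqP; lia.
- by rewrite card_ord.
- have H0 : forall k, k < n.+1 -> connect (path_graph n.+1) ord0 (inord k).
    elim=> [|k IH] Hk.
      by rewrite (_ : inord 0 = ord0) //; apply: val_inj; rewrite /= inordK.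
    apply: connect_trans (IH (ltnW Hk)) (connect1 _).
    by rewrite /path_graph !inordK ?eqxx //; lia.
  have Hs : connect_sym (path_graph n.+1).
    by apply: sym_connect_sym => x y; rewrite /path_graph orbC.
  move=> x y; apply: (@connect_trans _ _ ord0).
    by rewrite Hs -(inord_val x); apply: H0.
  by rewrite -(inord_val y); apply: H0.
- apply: acyclic_ord => m a b Hab; rewrite /path_graph.
  move=> /orP[] /eqP H1 /orP[] /eqP H2 Ha Hb; try lia.
  have Eab : a = b by apply: ord_inj; lia.
  by move: Hab; rewrite Eab eqxx.
Qed.

Lemma path_part n : 0 < n -> is_tree (path_graph n) /\
        num_status (path_graph n) = uphalf (diam (path_graph n)).+1.
Proof.
move=> Hn; have Ht := path_tree Hn; split => //.
case: n Hn Ht => [//|n] _ Ht.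
have [_ _ Hc _] := Ht.
have Hd : n <= diam (path_graph n.+1).
  apply: leq_trans (diam_ge (path_graph n.+1) ord0 ord_max).
  have [p [Hs Hp Hl]] := dist_walk (ord0 : 'I_n.+1) ord_max Hc.
  have [H1 H2] := path_walk Hp; rewrite Hl /= in H1 H2; by rewrite -Hs; exact: H1.
have Hk : forall x : 'I_n.+1, rev_ord (rev_ord x) = x by move=> x; exact: rev_ordK.
have Ha : forall x y, (path_graph n.+1) (rev_ord x) (rev_ord y) = (path_graph n.+1) x y.
  move=> x y; rewrite /path_graph /=.
  have := ltn_ord x; have := ltn_ord y => Hx Hy.
  apply/orP/orP; case=> /eqP H; [right|left|right|left]; apply/eqP; lia.
have Hle : num_status (path_graph n.+1) <= uphalf n.+1.
  have := @num_status_le _ (path_graph n.+1) [seq status (path_graph n.+1) (inord i) | i <- iota 0 (uphalf n.+1)].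
  rewrite size_map size_iota; apply => v.
  case: (ltnP v (uphalf n.+1)) => Hv.
    by apply/mapP; exists (nat_of_ord v); rewrite ?mem_iota ?inord_val.
  apply/mapP; exists (n - v); first by rewrite mem_iota uphalfE; have := ltn_ord v; rewrite uphalfE in Hv; lia.
  rewrite -(status_autom Hk Ha v); congr status; apply: val_inj.
  rewrite /= inordK //; lia.
apply/eqP; rewrite eqn_leq part1 // andbT.
apply: (leq_trans Hle); rewrite !uphalfE; apply: half_leq; lia.
Qed.

From mathcomp Require Import fingroup perm.

Lemma star_tree n : 0 < n -> is_tree (star_graph n).
Proof.
case: n => [//|n] _; split.
- split.
  + by move=> x y; rewrite /star_graph eq_sym orbC.
  + by move=> x; rewrite /star_graph eqxx.
- by rewrite card_ord.
- move=> x y; apply: (@connect_trans _ _ ord0).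
    case: (eqVneq x ord0) => [->|Hx]; first exact: connect0.
    by apply: connect1; rewrite /star_graph Hx orbT.
  case: (eqVneq y ord0) => [->|Hy]; first exact: connect0.
  by apply: connect1; rewrite /star_graph eq_sym Hy.
- apply: acyclic_ord => m a b Hab /andP[_ H1] /andP[_ H2] Ha Hb.
  have Eab : a = b.
    apply: ord_inj; move: H1 H2; case/orP => /eqP H1; case/orP => /eqP H2; lia.
  by move: Hab; rewrite Eab eqxx.
Qed.

Lemma uphalf_ge1 k : 1 <= uphalf k.+1.
Proof. by rewrite uphalfE; apply: (@half_leq 2). Qed.

Lemma star_part n : 0 < n -> is_tree (star_graph n) /\
        num_status (star_graph n) = uphalf (diam (star_graph n)).+1.
Proof.
move=> Hn; have Ht := star_tree Hn; split => //.
apply/eqP; rewrite eqn_leq part1 // andbT.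
case: n Hn Ht => [//|[|[|n]]] _ Ht.
- apply: leq_trans (uphalf_ge1 _).
  have := @num_status_le _ (star_graph 1) [:: status (star_graph 1) ord0]; apply.
  by move=> v; rewrite (ord1 v) inE.
- apply: leq_trans (uphalf_ge1 _).
  have := @num_status_le _ (star_graph 2) [:: status (star_graph 2) ord0]; apply.
  have Hk : forall x : 'I_2, rev_ord (rev_ord x) = x by move=> x; exact: rev_ordK.
  have Ha : forall x y : 'I_2, star_graph 2 (rev_ord x) (rev_ord y) = star_graph 2 x y.
    by case=> [[|[|?]] ?] // [[|[|?]] ?].
  move=> v; case: v => [[|[|?]] Hv] //.
    by rewrite inE; apply/eqP; congr status; apply: ord_inj.
  rewrite inE -(status_autom Hk Ha); apply/eqP; congr status; apply: ord_inj.
  by rewrite /=.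
- have [_ _ Hc _] := Ht.
  have Hz : forall z : 'I_n.+3, (nat_of_ord z == 0) = (z == ord0).
    by case=> [[|k] Hk].
  have Hle : num_status (star_graph n.+3) <= 2.
    have := @num_status_le _ (star_graph n.+3)
      [:: status (star_graph n.+3) ord0; status (star_graph n.+3) (inord 1)]; apply.
    move=> v; case: (eqVneq v ord0) => [->|Hv]; first by rewrite inE eqxx.
    set s := tperm (inord 1) v.
    have Hk : forall x, s (s x) = x by move=> x; rewrite /s tpermK.
    have H0 : s ord0 = ord0.
      rewrite /s tpermD // eq_sym //.
      by apply/eqP => /(congr1 val); rewrite /= inordK.
    have Ha : forall x y, star_graph n.+3 (s x) (s y) = star_graph n.+3 x y.
      move=> x y; rewrite /star_graph !Hz (inj_eq (@perm_inj _ s)).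
      by rewrite -{1}H0 -{2}H0 !(inj_eq (@perm_inj _ s)).
    have -> : v = s (inord 1) by rewrite /s tpermL.
    by rewrite (status_autom Hk Ha) !inE eqxx orbT.
  apply: (leq_trans Hle).
  have Hd : 2 <= diam (star_graph n.+3).
    apply: leq_trans (diam_ge _ (inord 1) (inord 2)).
    have [p [Hs Hp Hl]] := dist_walk (inord 1 : 'I_n.+3) (inord 2) Hc.
    rewrite -Hs; case: p Hs Hp Hl => [|z [|z' p]] //= _.
      by move=> _ /(congr1 val); rewrite /= !inordK.
    rewrite andbT => H Hz2; move: H; by rewrite Hz2 /star_graph /= !inordK // andbF.
  rewrite uphalfE; apply: (@half_leq 4); lia.
Qed.
Theorem lemma3p2 :
  (forall (T : finType) (e : rel T), is_tree e ->
     uphalf (diam e).+1 <= num_status e)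
  /\ (forall n : nat, 0 < n -> is_tree (path_graph n) /\
        num_status (path_graph n) = uphalf (diam (path_graph n)).+1)
  /\ (forall n : nat, 0 < n -> is_tree (star_graph n) /\
        num_status (star_graph n) = uphalf (diam (star_graph n)).+1).
Proof.
split; first exact: part1.
split; [exact: path_part | exact: star_part].
Qed.
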